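(* Define in $\mathcal{S}$ the polynomials $A_1=x_3$, $A_2=x_4$, $A_3=x_1^2+x_2^2$, $A_4=x_1x_5+x_2x_6$, $A_5=x_1x_6-x_2x_5$, $A_6=x_5^2+x_6^2$. Each $A_j$ Poisson-commutes with $x_3$, and they span (as generators) a Poisson subalgebra whose only nonzero brackets among generators (up to antisymmetry) are $\{A_2,A_3\}=-2A_3$, $\{A_2,A_6\}=2A_6$, $\{A_3,A_4\}=4A_2A_3$, $\{A_3,A_5\}=4A_1A_3$, $\{A_3,A_6\}=8(A_2A_4+A_1A_5)$, $\{A_4,A_6\}=4A_2A_6$, $\{A_5,A_6\}=4A_1A_6$. Moreover $A_1$, $A_4-A_2^2$ and $A_5-2A_1A_2$ Poisson-commute with every $A_j$.
   Context: $\mathcal{S}=\mathbb{R}[x_1,\dots,x_6]$ is the Lie–Poisson algebra of $\mathfrak{c}(2)$: its bracket is determined by the Leibniz rule and the nonzero brackets ($i<j$) $\{x_1,x_3\}=-x_2$, $\{x_1,x_4\}=x_1$, $\{x_1,x_5\}=2x_4$, $\{x_1,x_6\}=2x_3$, $\{x_2,x_3\}=x_1$, $\{x_2,x_4\}=x_2$, $\{x_2,x_5\}=-2x_3$, $\{x_2,x_6\}=2x_4$, $\{x_3,x_5\}=x_6$, $\{x_3,x_6\}=-x_5$, $\{x_4,x_5\}=x_5$, $\{x_4,x_6\}=x_6$. *)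

(* Defs.v *)
From HB Require Import structures.
From mathcomp Require Import all_boot all_order all_algebra.
From mathcomp Require Import mpoly.
From Stdlib Require Import Rdefinitions.
From mathcomp Require Import Rstruct.
Set Implicit Arguments. Unset Strict Implicit. Unset Printing Implicit Defensive.
Import Order.TTheory GRing.Theory Num.Theory.
Local Open Scope ring_scope.

Notation S := {mpoly R[6]}.

(* x k = the variable x_k, for k = 1..6 (index k-1 in 'I_6). *)
Definition x (k : nat) : S := 'X_(@inord 5 k.-1).

(* Structure constants {x_a, x_b} for a < b (1-based), as in the context. *)
Definition cstr (a b : nat) : S :=
  match a, b with
  | 1, 3 => - x 2
  | 1, 4 => x 1
  | 1, 5 => 2%:R * x 4
  | 1, 6 => 2%:R * x 3
  | 2, 3 => x 1
  | 2, 4 => x 2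
  | 2, 5 => - (2%:R * x 3)
  | 2, 6 => 2%:R * x 4
  | 3, 5 => x 6
  | 3, 6 => - x 5
  | 4, 5 => x 5
  | 4, 6 => x 6
  | _, _ => 0
  end.

Definition bra (i j : 'I_6) : S :=
  if ltn i j then cstr i.+1 j.+1
  else if ltn j i then - cstr j.+1 i.+1 else 0.

(* The Lie–Poisson bracket: the unique biderivation extending bra,
   {f, g} = sum_{i,j} (d f / d x_i) (d g / d x_j) {x_i, x_j}. *)
Definition pb (f g : S) : S :=
  \sum_(i < 6) \sum_(j < 6) (mderiv i f * mderiv j g) * bra i j.

Definition A (k : nat) : S :=
  match k with
  | 1 => x 3
  | 2 => x 4
  | 3 => x 1 ^+ 2 + x 2 ^+ 2
  | 4 => x 1 * x 5 + x 2 * x 6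
  | 5 => x 1 * x 6 - x 2 * x 5
  | 6 => x 5 ^+ 2 + x 6 ^+ 2
  | _ => 0
  end.

Definition Atab (j k : nat) : S :=
  match j, k with
  | 2, 3 => - (2%:R * A 3)
  | 2, 6 => 2%:R * A 6
  | 3, 4 => 4%:R * (A 2 * A 3)
  | 3, 5 => 4%:R * (A 1 * A 3)
  | 3, 6 => 8%:R * (A 2 * A 4 + A 1 * A 5)
  | 4, 6 => 4%:R * (A 2 * A 6)
  | 5, 6 => 4%:R * (A 1 * A 6)
  | _, _ => 0
  end.

(* Main.v *)
Require Import Defs.
From HB Require Import structures.
From mathcomp Require Import all_boot all_order all_algebra.
From mathcomp Require Import mpoly.
From Stdlib Require Import Rdefinitions.
From mathcomp Require Import Rstruct.
From mathcomp Require Import ring.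
Import GRing.Theory.
Local Open Scope ring_scope.

Lemma pbDl f g h : pb (f + g) h = pb f h + pb g h.
Proof.
rewrite /pb -big_split; apply eq_bigr => i _; rewrite -big_split; apply eq_bigr => j _.
by rewrite mderivD !mulrDl.
Qed.
Lemma pbDr f g h : pb h (f + g) = pb h f + pb h g.
Proof.
rewrite /pb -big_split; apply eq_bigr => i _; rewrite -big_split; apply eq_bigr => j _.
by rewrite mderivD !mulrDr !mulrDl.
Qed.
Lemma pbNl f h : pb (- f) h = - pb f h.
Proof.
rewrite /pb -sumrN; apply eq_bigr => i _; rewrite -sumrN; apply eq_bigr => j _.
by rewrite mderivN !mulNr.
Qed.
Lemma pbNr f h : pb h (- f) = - pb h f.
Proof.
rewrite /pb -sumrN; apply eq_bigr => i _; rewrite -sumrN; apply eq_bigr => j _.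
by rewrite mderivN mulrN !mulNr.
Qed.
Lemma pbBl f g h : pb (f - g) h = pb f h - pb g h.
Proof. by rewrite pbDl pbNl. Qed.
Lemma pbBr f g h : pb h (f - g) = pb h f - pb h g.
Proof. by rewrite pbDr pbNr. Qed.
Lemma pbMl f g h : pb (f * g) h = f * pb g h + g * pb f h.
Proof.
rewrite /pb !mulr_sumr -big_split; apply eq_bigr => i _.
rewrite !mulr_sumr -big_split; apply eq_bigr => j _.
rewrite mderivM /=; ring.
Qed.
Lemma pbMr f g h : pb h (f * g) = f * pb h g + g * pb h f.
Proof.
rewrite /pb !mulr_sumr -big_split; apply eq_bigr => i _.
rewrite !mulr_sumr -big_split; apply eq_bigr => j _.
rewrite mderivM /=; ring.
Qed.
Lemma mderiv_nat i n : mderiv i (n%:R : S) = 0.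
Proof. by rewrite mderivMn -(mpolyC1) mderivC mul0rn. Qed.
Lemma pbnl n h : pb n%:R h = 0.
Proof. by rewrite /pb big1 // => i _; rewrite big1 // => j _; rewrite mderiv_nat !mul0r. Qed.
Lemma pbnr n h : pb h n%:R = 0.
Proof. by rewrite /pb big1 // => i _; rewrite big1 // => j _; rewrite mderiv_nat mulr0 mul0r. Qed.

Lemma mderivXU (i p : 'I_6) : mderiv i ('X_p : S) = (p == i)%:R.
Proof.
rewrite mderivX mnm1E.
case: eqP => [->|_]; last by rewrite scale0r.
have -> : (U_(i) - U_(i) = 0)%MM by apply/mnmP=> k; rewrite !mnmE subnn.
by rewrite scale1r mpolyX0.
Qed.

Lemma pbXX (p q : 'I_6) : pb 'X_p 'X_q = bra p q.
Proof.
rewrite /pb (bigD1 p) //= [X in _ + X]big1; last first.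
  move=> i Hi; rewrite big1 // => j _.
  rewrite mderivXU; have -> : (p == i) = false by apply/negbTE; rewrite eq_sym.
  by rewrite !mul0r.
rewrite addr0 (bigD1 q) //= [X in _ + X]big1; last first.
  move=> j Hj; rewrite [mderiv j _]mderivXU; have -> : (q == j) = false by apply/negbTE; rewrite eq_sym.
  by rewrite mulr0 mul0r.
by rewrite !mderivXU !eqxx mulr1 mul1r !addr0.
Qed.

Lemma pbx a b : pb (x a) (x b) = bra (inord a.-1) (inord b.-1).
Proof. exact: pbXX. Qed.

Ltac simp := rewrite ?expr2 ?(pbDl,pbDr,pbBl,pbBr,pbNl,pbNr,pbMl,pbMr,pbnl,pbnr) ?pbx /bra ?inordK //=.

Theorem mainTheorem9 :
  (forall j : nat, leq 1 j && leq j 6 -> pb (A j) (x 3) = 0) /\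
  (forall j k : nat, leq 1 j -> ltn j k -> leq k 6 ->
     pb (A j) (A k) = Atab j k) /\
  (forall j : nat, leq 1 j && leq j 6 ->
     [/\ pb (A 1) (A j) = 0,
         pb (A 4 - A 2 ^+ 2) (A j) = 0
       & pb (A 5 - 2%:R * A 1 * A 2) (A j) = 0]).
Proof.
split; [|split].
- case=> [|[|[|[|[|[|[|j]]]]]]] //= _; rewrite /A; simp; ring.
- move=> j k; case: j => [|[|[|[|[|[|[|j]]]]]]];
  case: k => [|[|[|[|[|[|[|k]]]]]]] //= _ _ _; rewrite /Atab /A; simp; ring.
- case=> [|[|[|[|[|[|[|j]]]]]]] //= _; rewrite /A; split; simp; ring.
Qed.
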